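(* With the notation below, $\bar{\mathcal{A}}_q=\bar{\mathcal{A}}^0_q\oplus\bar{\mathcal{A}}^1_q$ and $\bar{\mathcal{C}}_q=\bar{\mathcal{C}}^0_q\oplus\bar{\mathcal{C}}^1_q$, and: (1) $\bar{\mathcal{C}}^0_q\subseteq\bar{\mathcal{A}}^0_q$ and $\dim_{\bar K}\bar{\mathcal{A}}^0_q=2\dim_{\bar K}\bar{\mathcal{C}}^0_q$; (2) $\bar{\mathcal{C}}^1_q=\bar{\mathcal{A}}^1_q$; in particular $\dim_{\bar K}\bar{\mathcal{A}}^1_q=\dim_{\bar K}\bar{\mathcal{C}}^1_q$.
   Context: $q$ indeterminate, $K=\mathbb{Q}(q)$, $\bar K$ an algebraic closure, $m,n\ge0$, $r\ge2$. $\mathcal{H}_{\bar K,r}(q)$ is the type $A$ Iwahori–Hecke algebra over $\bar K$ (generators $T_i$, $T_i^2=(q-q^{-1})T_i+1$, braid relations); the Goldman involution $X\mapsto\hat X$ is the algebra automorphism with $\hat T_i=(q-q^{-1})-T_i$, and $\mathcal{H}^1_{\bar K,r}(q)=\{X:\hat X=X\}$. $\bar V$ is the $\mathbb{Z}_2$-graded $\bar K$-space with basis $v_1,\dots,v_{m+n}$, $|v_k|=0$ for $k\le m$, $1$ for $k>m$; $\pi_r$ is the $q$-permutation representation on $\bar V^{\otimes r}$: $\pi_r(T_i)=\mathrm{Id}^{\otimes i-1}\otimes T\otimes\mathrm{Id}^{\otimes r-i-1}$, where $T(v_k\otimes v_k)=\frac{(-1)^{|v_k|}(q+q^{-1})+q-q^{-1}}{2}v_k\otimes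 v_k$, $T(v_k\otimes v_l)=(-1)^{|v_k||v_l|}v_l\otimes v_k+(q-q^{-1})v_k\otimes v_l$ for $k<l$, $T(v_k\otimes v_l)=(-1)^{|v_k||v_l|}v_l\otimes v_k$ for $k>l$. $\bar{\mathcal{A}}_q=\pi_r(\mathcal{H}_{\bar K,r}(q))$, $\bar{\mathcal{C}}_q=\pi_r(\mathcal{H}^1_{\bar K,r}(q))$. Write $\mathcal{H}_{\bar K,r}(q)=\bigoplus_\lambda I_{q,\lambda}$ (Wedderburn decomposition, $\lambda$ running over partitions of $r$, $I_{q,\lambda}\cong\operatorname{Mat}_{d_\lambda}(\bar K)$ the block of the Specht module $S^\lambda$); $\hat I_{q,\lambda}=I_{q,\lambda'}$ with $\lambda'$ the transpose. Let $H(m,n;r)$ be the set of partitions $\lambda=(\lambda_1,\lambda_2,\dots)$ of $r$ with $\lambda_j\le n$ for all $j>m$ (those in the $(m,n)$-hook); it is known that $\pi_r$ is injective on $I_{q,\lambda}$ for $\lambda\in H(m,n;r)$ and zero on $I_{q,\lambda}$ otherwise, so $\bar{\mathcal{A}}_q=\bigoplus_{\lambda\in H(m,n;r)}\pi_r(I_{q,\lambda})$. Let $H_0(m,n;r)=\{\lambda:\lambda,\lambda'\in H(m,n;r)\}$ and $H_1(m,n;r)=H(m,n;r)\setminus H_0(m,n;r)$. For $\lambda\ne\lambda'$ put $\tilde I_{q,\lambda}=\{X+\hat X:X\in I_{q,\lambda}\}$; for $\lambda=\lambda'$ put $\tilde I_{q,\lambda}=\{X\in I_{q,\lambda}:\hat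 X=X\}$, which is a direct sum $\tilde I^+_{q,\lambda}\oplus\tilde I^-_{q,\lambda}$ of two simple algebras $\cong\operatorname{Mat}_{d_\lambda/2}(\bar K)$. Define $\bar{\mathcal{A}}^0_q=\bigoplus_{\lambda\in H_0(m,n;r)}\pi_r(I_{q,\lambda})$, $\bar{\mathcal{A}}^1_q=\bigoplus_{\lambda\in H_1(m,n;r)}\pi_r(I_{q,\lambda})$, $\bar{\mathcal{C}}^0_q=\bigoplus_{\lambda\in H_0(m,n;r),\,\lambda>\lambda'}\pi_r(\tilde I_{q,\lambda})\oplus\bigoplus_{\lambda\in H_0(m,n;r),\,\lambda=\lambda'}\big(\pi_r(\tilde I^+_{q,\lambda})\oplus\pi_r(\tilde I^-_{q,\lambda})\big)$, $\bar{\mathcal{C}}^1_q=\bigoplus_{\lambda\in H_1(m,n;r)}\pi_r(\tilde I_{q,\lambda})$, where $>$ is the lexicographic order on partitions. *)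

(* Defs.v *)
From HB Require Import structures.
From mathcomp Require Import all_boot all_order all_algebra falgebra.
Set Implicit Arguments. Unset Strict Implicit. Unset Printing Implicit Defensive.
Import GRing.Theory.
Local Open Scope ring_scope.

Definition ptn (r : nat) := (r.-tuple 'I_r.+1)%type.
Definition pv r (l : ptn r) : seq nat := [seq val i | i <- val l].
Definition is_part r (l : ptn r) : bool :=
  sorted geq (pv l) && (sumn (pv l) == r).
Definition ptn_conj r (l : ptn r) : ptn r :=
  [tuple (inord (count (fun x => (i < x)%N) (pv l)) : 'I_r.+1) | i < r].
(* (m,n)-hook: l_j <= n for all j > m (1-based), i.e. for 0-based j >= m *)
Definition inH (m n r : nat) (l : ptn r) : bool :=
  [forall j : 'I_r, (m <= j)%N ==> (nth 0 (pv l) j <= n)%N].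
Definition inH0 m n r (l : ptn r) := inH m n l && inH m n (ptn_conj l).
Definition inH1 m n r (l : ptn r) := inH m n l && ~~ inH m n (ptn_conj l).
Fixpoint lex_lt (s t : seq nat) : bool :=
  match s, t with
  | x :: s', y :: t' => (x < y)%N || ((x == y) && lex_lt s' t')
  | _, _ => false
  end.
Definition ptn_gt r (l k : ptn r) := lex_lt (pv k) (pv l).

(* ---------- tensor space  V^{\otimes r}, basis v_{w_1} ⊗ ... ⊗ v_{w_r} *)
Definition word (m n r : nat) := (r.-tuple 'I_(m + n))%type.
Definition wv m n r (w : word m n r) : seq nat := [seq val i | i <- val w].
Definition swapi (s : seq nat) (i : nat) :=
  set_nth 0 (set_nth 0 s i (nth 0 s i.+1)) i.+1 (nth 0 s i).
(* parity of v_k (0-based k): odd iff k >= m *)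
Definition par (m k : nat) : bool := (m <= k)%N.
(* coefficient of basis vector u in T_(i+1) applied to basis vector w *)
Definition Tcoef (F : fieldType) (q : F) (m i : nat) (u w : seq nat) : F :=
  let k := nth 0 w i in let l := nth 0 w i.+1 in
  let sg := (-1) ^+ (par m k && par m l) in
  if k == l then
    (if u == w then ((-1) ^+ par m k * (q + q^-1) + q - q^-1) / 2%:R else 0)
  else if (k < l)%N then
    (if u == swapi w i then sg else 0) + (if u == w then q - q^-1 else 0)
  else (if u == swapi w i then sg else 0).
(* pi_r(T_(i+1)) as a matrix acting on column coordinate vectors *)
Definition Tmat (F : fieldType) (q : F) (m n r : nat) (i : nat)
  : 'M[F]_#|{: word m n r}| :=
  \matrix_(a, b) Tcoef q m i (wv (enum_val a)) (wv (enum_val b)).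

Definition mat_block (F : fieldType) (H : falgType F) (U : {vspace H}) (d : nat)
  : Prop :=
  exists f : 'Hom('M[F]_d, H),
    [/\ lker f = 0%VS, limg f = U & forall A B, f (A *m B) = f A * f B].

Definition tildeI (F : fieldType) (H : falgType F) r (hat : 'End(H))
  (I : ptn r -> {vspace H}) (l : ptn r) : {vspace H} :=
  if l == ptn_conj l then (I l :&: fixedSpace hat)%VS
  else ((\1 + hat)%VF @: I l)%VS.

(* Main.v *)
Require Import Defs.
From HB Require Import structures.
From mathcomp Require Import all_boot all_order all_algebra falgebra zify.

Lemma count_ltn_iota a r : count (fun i => (i < a)%N) (iota 0 r) = minn a r.
Proof.
elim: r => [|r IH]; first by rewrite minn0.
rewrite -addn1 iotaD count_cat IH /= addn0 add0n.
case: (ltnP r a) => H /=; lia.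
Qed.

Lemma sorted_prefix (p : pred nat) (s : seq nat) :
  sorted geq s -> (forall x y, (x <= y)%N -> p x -> p y) ->
  forall j, (j < size s)%N -> (j < count p s)%N = p (nth 0 s j).
Proof.
move=> Hs Hp; elim: s Hs => [|x s IH] Hs j //=.
have Hs' : sorted geq s by move: Hs; rewrite /= => /path_sorted.
have Hall : all (fun y => y <= x)%N s.
  have tr : transitive geq by move=> b a c /= h1 h2; exact: leq_trans h2 h1.
  move: Hs => /=; rewrite (path_sortedE tr).
  by case/andP.
have Hnp : ~~ p x -> count p s = 0%N.
  move=> npx; apply/eqP; rewrite -leqn0 leqNgt -has_count; apply/hasPn => y ys.
  by apply: contra npx; apply: Hp; move/allP: Hall => /(_ y ys).
case: j => [|j] /= Hj.
  case px: (p x) => //=; by rewrite Hnp ?px.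
case px: (p x) => /=.
  by rewrite add1n ltnS IH.
rewrite Hnp ?px // add0n.
apply/esym/negbTE; apply: contra (negbT px); apply: Hp.
by move/allP: Hall; apply; rewrite mem_nth.
Qed.

Lemma pv_size r (l : ptn r) : size (pv l) = r.
Proof. by rewrite /pv size_map size_tuple. Qed.

Lemma pv_le r (l : ptn r) x : x \in pv l -> (x <= r)%N.
Proof. by case/mapP => i _ ->; rewrite -ltnS ltn_ord. Qed.

Arguments pv_le {r l x}.
Arguments pv_size {r}.

Lemma pv_inj r : injective (@pv r).
Proof. move=> l k /(inj_map val_inj) H; exact: val_inj. Qed.

Lemma pv_conj r (l : ptn r) :
  pv (ptn_conj l) = [seq count (fun x => (i < x)%N) (pv l) | i <- iota 0 r].
Proof.
rewrite /pv /ptn_conj /= -map_comp -val_enum_ord -map_comp; apply: eq_map => i /=.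
rewrite inordK // ltnS; apply: leq_trans (count_size _ _) _; rewrite pv_size //.
Qed.

Lemma sumn_count_swap (s t : seq nat) :
  sumn [seq count (fun x => (i < x)%N) s | i <- t] =
  sumn [seq count (fun i => (i < x)%N) t | x <- s].
Proof.
rewrite !sumnE !big_map.
under eq_bigr => i _ do rewrite -sumn_count sumnE big_map.
rewrite exchange_big /=; apply: eq_bigr => x _.
by rewrite -sumn_count sumnE big_map.
Qed.

Lemma conj_part r (l : ptn r) : is_part l -> is_part (ptn_conj l).
Proof.
case/andP=> Hs Hsum; apply/andP; split.
  rewrite pv_conj sorted_map; apply: sub_sorted (iota_ltn_sorted 0 r).
  move=> i j /= Hij; apply: sub_count => x /=; exact: ltn_trans.
apply/eqP; apply: etrans (eqP Hsum).
rewrite pv_conj sumn_count_swap sumnE [RHS]sumnE !big_map.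
apply: eq_big_seq => x xl; rewrite count_ltn_iota.
by apply/minn_idPl; rewrite -ltnS ltn_ord.
Qed.

Lemma conjK r (l : ptn r) : is_part l -> ptn_conj (ptn_conj l) = l.
Proof.
case/andP=> Hs Hsum; apply: pv_inj.
rewrite pv_conj -[RHS](mkseq_nth 0 (pv l)) pv_size /mkseq; apply/eq_in_map => j.
rewrite mem_iota add0n => /andP[_ Hj].
rewrite pv_conj count_map.
rewrite (eq_in_count (a2 := fun i => (i < nth 0 (pv l) j)%N)); last first.
  move=> i _ /=; rewrite sorted_prefix //; last by rewrite pv_size.
  move=> x y /= h1 h2; exact: leq_trans h2 h1.
rewrite count_ltn_iota; apply/minn_idPl; apply: pv_le; apply: mem_nth.
by rewrite pv_size.
Qed.

Lemma lex_total (s t : seq nat) : size s = size t -> s != t -> lex_lt s t || lex_lt t s.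
Proof.
elim: s t => [|x s IH] [|y t] //= [Hsz] Hne.
case: (ltngtP x y) => //= Hxy; subst.
apply: IH => //; apply: contra Hne => /eqP ->; by [].
Qed.

Lemma lex_asym (s t : seq nat) : lex_lt s t -> lex_lt t s = false.
Proof.
elim: s t => [|x s IH] [|y t] //= /orP[H|/andP[/eqP E H]].
  by rewrite ltnNge (ltnW H) /= gtn_eqF.
by subst; rewrite ltnn eqxx /= IH.
Qed.

Lemma lex_irr (s : seq nat) : lex_lt s s = false.
Proof. by elim: s => //= x s ->; rewrite ltnn eqxx. Qed.

Import GRing.Theory.
Local Open Scope ring_scope.

Lemma sum_delta (V : nmodType) (J : finType) (Pr : pred J) (F : J -> V) k :
  Pr k -> \sum_(l | Pr l) (if l == k then F l else 0) = F k.
Proof.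
move=> Pk; rewrite (bigD1 k) //= eqxx big1 ?addr0 // => l /andP[_ /negbTE -> //].
Qed.

Lemma dim_mat_block (F : fieldType) (H : falgType F) (U : {vspace H}) d :
  mat_block U d -> \dim U = (d * d)%N.
Proof.
case=> f [kf imf _]; rewrite -imf limg_dim_eq ?kf ?capv0 // dimvf.
by rewrite dim_matrix.
Qed.
Arguments dim_mat_block {F H U d}.

Theorem theorem6p1
  (* \bar K : an algebraically closed field of characteristic 0 containing q,
     q transcendental over Q *)
  (F : closedFieldType) (q : F)
  (charF0 : [pchar F] =i pred0)
  (q_transc : forall p : {poly rat}, p != 0 -> ~~ root (map_poly ratr p) q)
  (m n r : nat) (r_ge2 : (2 <= r)%N)
  (* the Hecke algebra H_{\bar K, r}(q): generated by T_1..T_{r-1} subject to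
     the quadratic and braid relations, of dimension r! *)
  (H : falgType F) (T : 'I_r.-1 -> H)
  (T_quad : forall i, T i * T i = (q - q^-1) *: T i + 1)
  (T_braid : forall i j : 'I_r.-1, i.+1 = j :> nat -> T i * T j * T i = T j * T i * T j)
  (T_comm : forall i j : 'I_r.-1, (i.+1 < j)%N -> T i * T j = T j * T i)
  (T_gen : agenv (span [seq T i | i <- enum 'I_r.-1]) = fullv)
  (dimH : \dim {: H} = r`!)
  (* the Goldman involution *)
  (hat : 'End(H))
  (hat1 : hat 1 = 1)
  (hatM : forall x y, hat (x * y) = hat x * hat y)
  (hatT : forall i, hat (T i) = (q - q^-1)%:A - T i)
  (* the q-permutation representation pi_r on V^{\otimes r} *)
  (pi : 'Hom(H, 'M[F]_#|{: word m n r}|))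
  (pi1 : pi 1 = 1%:M)
  (piM : forall x y, pi (x * y) = pi x *m pi y)
  (piT : forall i : 'I_r.-1, pi (T i) = Tmat q m n r i)
  (* Wedderburn decomposition H = \oplus_lambda I_lambda, I_lambda = Mat_{d_lambda} *)
  (I : ptn r -> {vspace H}) (d : ptn r -> nat)
  (I_sum : (\sum_(l | is_part l) I l)%VS = fullv)
  (I_direct : directv (\sum_(l | is_part l) I l))
  (I_ideal : forall l, is_part l -> forall x y, y \in I l ->
       (x * y \in I l) && (y * x \in I l))
  (I_mat : forall l, is_part l -> (0 < d l)%N /\ mat_block (I l) (d l))
  (* \hat I_lambda = I_{lambda'} *)
  (I_hat : forall l, is_part l -> (hat @: I l)%VS = I (ptn_conj l))
  (* pi_r injective on I_lambda for lambda in H(m,n;r), zero otherwise *)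
  (pi_inj : forall l, is_part l -> inH m n l -> (lker pi :&: I l)%VS = 0%VS)
  (pi_zero : forall l, is_part l -> ~~ inH m n l -> (pi @: I l)%VS = 0%VS)
  (* for lambda = lambda', \tilde I_lambda = \tilde I^+ \oplus \tilde I^-,
     two simple algebras each isomorphic to Mat_{d_lambda/2} *)
  (Ip Im : ptn r -> {vspace H})
  (I_self : forall l, is_part l -> l = ptn_conj l ->
     [/\ ~~ odd (d l),
         tildeI hat I l = (Ip l + Im l)%VS /\ (Ip l :&: Im l = 0)%VS,
         (forall x y, x \in Ip l -> y \in Im l -> x * y = 0 /\ y * x = 0),
         mat_block (Ip l) (d l %/ 2)%N & mat_block (Im l) (d l %/ 2)%N]) :
  let A := limg pi in
  let C := (pi @: fixedSpace hat)%VS in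
  let A0 := (\sum_(l | is_part l && inH0 m n l) (pi @: I l))%VS in
  let A1 := (\sum_(l | is_part l && inH1 m n l) (pi @: I l))%VS in
  let C0 := ((\sum_(l | [&& is_part l, inH0 m n l & ptn_gt l (ptn_conj l)])
                 (pi @: tildeI hat I l))
           + (\sum_(l | [&& is_part l, inH0 m n l & l == ptn_conj l])
                 ((pi @: Ip l) + (pi @: Im l))))%VS in
  let C1 := (\sum_(l | is_part l && inH1 m n l) (pi @: tildeI hat I l))%VS in
  [/\ A = (A0 + A1)%VS /\ (A0 :&: A1 = 0)%VS,
      C = (C0 + C1)%VS /\ (C0 :&: C1 = 0)%VS,
      (C0 <= A0)%VS /\ \dim A0 = (2 * \dim C0)%N
    & C1 = A1 /\ \dim A1 = \dim C1].

Proof.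
move=> A C A0 A1 C0 C1.
have hatK : forall x, hat (hat x) = x.
  have sT : (span [seq T i | i <- enum 'I_r.-1] <= fixedSpace (hat \o hat)%VF)%VS.
    apply/span_subvP => _ /mapP[i _ ->]; apply/fixedSpaceP.
    by rewrite comp_lfunE hatT linearB linearZ /= hat1 hatT opprB addrC subrK.
  have: (agenv (span [seq T i | i <- enum 'I_r.-1]) <= fixedSpace (hat \o hat)%VF)%VS.
    apply: agenv_sub_modl.
      by rewrite -memvE; apply/fixedSpaceP; rewrite comp_lfunE !hat1.
    apply/prodvP => u v Hu /fixedSpaceP Hv; apply/fixedSpaceP.
    move/fixedSpacesP: sT => /(_ u Hu) /= Hu'.
    by rewrite comp_lfunE !hatM -!comp_lfunE Hu' Hv.
  by rewrite T_gen => /fixedSpacesP Hf x; rewrite -comp_lfunE Hf ?memvf.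
have hat_inj : injective hat := can_inj hatK.
have hat_ker : lker hat = 0%VS by apply/eqP/lker0P.
have He : forall l : ptn r, exists e : H, is_part l ->
    e \in I l /\ (forall y, y \in I l -> e * y = y /\ y * e = y).
  move=> l; case Pl: (is_part l); last by exists 0.
  have [_ [f [kf imf fM]]] := I_mat l Pl.
  exists (f 1%:M) => _; split; first by rewrite -imf memv_img ?memvf.
  move=> y; rewrite -imf => /memv_imgP[M _ ->].
  by rewrite -!fM mul1mx mulmx1.
have [e eP] := fin_all_exists He.
have capI : forall l k, is_part l -> is_part k -> l != k ->
    forall y, y \in I l -> y \in I k -> y = 0.
  move=> l k Pl Pk lk y yl yk; apply/eqP; rewrite -memv0.
  move/directv_sumP: I_direct => /(_ l Pl) <-.
  rewrite memv_cap yl; apply: (sumv_sup k) yk; by rewrite Pk eq_sym.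
have eE : forall k l, is_part k -> is_part l -> forall y, y \in I l ->
    e k * y = (if k == l then y else 0) /\ y * e k = (if k == l then y else 0).
  move=> k l Pk Pl y yl; case: eqP => [kl|kl]; first by subst k; exact: (eP l Pk).2.
  have [ek _] := eP k Pk.
  split; apply: (capI k l Pk Pl (introN eqP kl)).
  - by have /andP[_ ->] := I_ideal k Pk y _ ek.
  - by have /andP[-> _] := I_ideal l Pl (e k) _ yl.
  - by have /andP[-> _] := I_ideal k Pk y _ ek.
  - by have /andP[_ ->] := I_ideal l Pl (e k) _ yl.
have xdec : forall x, x = \sum_(l | is_part l) e l * x.
  move=> x; have: x \in (\sum_(l | is_part l) I l)%VS by rewrite I_sum memvf.
  case/memv_sumP => u Hu ->; apply: eq_bigr => k Pk; rewrite mulr_sumr.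
  under eq_bigr => l Pl do rewrite (eE k l Pk Pl _ (Hu l Pl)).1.
  under eq_bigr => l _ do rewrite eq_sym.
  by rewrite sum_delta.

pose c := @ptn_conj r.
have cP : forall l, is_part l -> is_part (c l) := fun l => @conj_part r l.
have cK : forall l, is_part l -> c (c l) = l := fun l => @conjK r l.
have hatI : forall l, is_part l -> forall x, x \in I l -> hat x \in I (c l).
  by move=> l Pl x xl; rewrite -I_hat // memv_img.
have hatI' : forall l, is_part l -> forall y, y \in I (c l) -> exists2 x, x \in I l & y = hat x.
  by move=> l Pl y; rewrite -I_hat // => /memv_imgP.
have hate : forall l, is_part l -> hat (e l) = e (c l).
  move=> l Pl; have Pc := cP l Pl.
  have [hl _] := eP l Pl; have [hcl hcl'] := eP (c l) Pc.
  have /hcl' [<- _] := hatI l Pl _ hl.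
  have [z zl ->] := hatI' l Pl _ hcl.
  by rewrite -hatM (proj2 (proj2 (eP l Pl) z zl)).
have Ihat_dim : forall l, is_part l -> \dim (I (c l)) = \dim (I l).
  by move=> l Pl; rewrite -I_hat // limg_dim_eq // hat_ker capv0.
pose S l := (pi @: I l)%VS.
pose prQ (Q : pred (ptn r)) : 'End('M[F]_#|{: word m n r}|) :=
  \sum_(l | is_part l && Q l) linfun (mulmx (pi (e l))).
have prS : forall Q k, is_part k -> forall y, y \in S k -> prQ Q y = if Q k then y else 0.
  move=> Q k Pk _ /memv_imgP[u uk ->]; rewrite sum_lfunE.
  under eq_bigr => l /andP[Pl _] do rewrite lfunE /= -piM (eE l k Pl Pk u uk).1 (fun_if pi) linear0.
  case Qk: (Q k); first by rewrite sum_delta // Pk Qk.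
  by rewrite big1 // => l /andP[_ Ql]; case: eqP => // lk; subst l; rewrite Qk in Ql.
have fixS : forall (Q : pred (ptn r)) k, is_part k -> Q k -> (S k <= fixedSpace (prQ Q))%VS.
  by move=> Q k Pk Qk; apply/fixedSpacesP => y yS; rewrite (prS Q k Pk y yS) Qk.
have kerS : forall (Q : pred (ptn r)) k, is_part k -> ~~ Q k -> (S k <= lker (prQ Q))%VS.
  by move=> Q k Pk Qk; apply/subvP => y yS; rewrite memv_ker (prS Q k Pk y yS) (negbTE Qk).
have fixker0 : forall (Q : pred (ptn r)) (U V : {vspace 'M[F]_#|{: word m n r}|}),
    (U <= fixedSpace (prQ Q))%VS -> (V <= lker (prQ Q))%VS -> (U :&: V = 0)%VS.
  move=> Q U V /fixedSpacesP hU /subvP hV; apply/eqP; rewrite -subv0.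
  apply/subvP => y /memv_capP[yU yV]; rewrite memv0 -(hU y yU) -memv_ker.
  exact: hV.

have inH0c : forall l, is_part l -> inH0 m n (c l) = inH0 m n l.
  by move=> l Pl; rewrite /inH0 -/c cK // andbC.
have pvne : forall l k : ptn r, l != k -> pv l != pv k.
  by move=> l k; apply: contra => /eqP /pv_inj ->.
have split3 : forall (V : nmodType) (Fn : ptn r -> V),
  \sum_(l | is_part l && inH0 m n l) Fn l =
  \sum_(l | [&& is_part l, inH0 m n l & ptn_gt l (c l)]) Fn l +
  \sum_(l | [&& is_part l, inH0 m n l & ptn_gt (c l) l]) Fn l +
  \sum_(l | [&& is_part l, inH0 m n l & l == c l]) Fn l.
  move=> V Fn; rewrite [LHS]big_mkcond [X in X + _ + _]big_mkcond [X in _ + X + _]big_mkcond [X in _ + X]big_mkcond -!big_split /=; apply: eq_bigr => l _.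
  case: (is_part l) (inH0 m n l) => [] [] /=; rewrite ?addr0 //.
  have [E|NE] := eqVneq l (c l).
    by rewrite /ptn_gt -E lex_irr add0r add0r.
  have hne : c l != l by rewrite eq_sym.
  rewrite /ptn_gt; have := lex_total _ _ (etrans (pv_size (c l)) (esym (pv_size l))) (pvne _ _ hne).
  case/orP => h; rewrite h (lex_asym _ _ h) ?addr0 ?add0r //.
have reidx : forall (V : nmodType) (Fn : ptn r -> V),
  \sum_(l | [&& is_part l, inH0 m n l & ptn_gt (c l) l]) Fn l =
  \sum_(l | [&& is_part l, inH0 m n l & ptn_gt l (c l)]) Fn (c l).
  move=> V Fn; rewrite (reindex_onto c c) => [|l /and3P[Pl _ _]]; last exact: cK.
  apply: eq_bigl => l; case: (boolP (is_part l)) => Pl.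
    by rewrite cK // eqxx andbT cP // inH0c.
  apply/negbTE/negP => /andP[/and3P[Pcl _ _] /eqP E].
  by move: (cP _ Pcl); rewrite E (negbTE Pl).
have Gne : forall l, ptn_gt l (c l) -> l != c l.
  by move=> l; apply: contraTneq => E; rewrite /ptn_gt -E lex_irr.
have Gpair : forall l k, is_part l -> is_part k -> ptn_gt l (c l) -> ptn_gt k (c k) -> l != k ->
    [/\ l != c k, c l != k & c l != c k].
  move=> l k Pl Pk Gl Gk lk.
  have h1 : l != c k.
    apply/eqP => E; have E2 : c l = k by rewrite E cK.
    move: Gl Gk; rewrite /ptn_gt => Gl Gk.
    rewrite E2 in Gl; rewrite -E in Gk.
    by rewrite (lex_asym _ _ Gl) in Gk.
  split => //.
  - by apply: contra h1 => /eqP E; rewrite -E cK.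
  - by apply: contra lk => /eqP E; rewrite -(cK l Pl) E cK.

have tIsub : forall l, is_part l -> l != c l -> (tildeI hat I l <= I l + I (c l))%VS.
  move=> l Pl ne; rewrite /tildeI (negbTE ne).
  apply/subvP => _ /memv_imgP[x xl ->]; rewrite add_lfunE id_lfunE.
  by rewrite memv_add // hatI.
have tIsubE : forall l, l == c l -> (tildeI hat I l <= I l)%VS.
  by move=> l E; rewrite /tildeI E capvSl.
have tIfix : forall l, (tildeI hat I l <= fixedSpace hat)%VS.
  move=> l; rewrite /tildeI; case: ifP => _; first exact: capvSr.
  apply/subvP => _ /memv_imgP[x xl ->]; apply/fixedSpaceP.
  by rewrite add_lfunE id_lfunE linearD /= hatK addrC.
have H1ne : forall l, inH1 m n l -> l != c l.
  by move=> l /andP[h1]; rewrite -/c; apply: contraNneq => E; rewrite -E.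
have H1c : forall l, inH1 m n l -> ~~ inH m n (c l).
  by move=> l /andP[].
have hA : A = (A0 + A1)%VS.
  rewrite /A -I_sum limg_sum (bigID (fun l => inH0 m n l)) /=; congr (_ + _)%VS.
  rewrite [LHS]big_mkcond [RHS]big_mkcond; apply: eq_bigr => l _.
  case Pl: (is_part l) => //=; rewrite /inH1 /inH0.
  by case h: (inH m n l) => //=; rewrite pi_zero ?h.
have A0fix : (A0 <= fixedSpace (prQ (fun l => inH0 m n l)))%VS.
  by apply/subv_sumP => l /andP[Pl h]; apply: fixS.
have A1ker : (A1 <= lker (prQ (fun l => inH0 m n l)))%VS.
  apply/subv_sumP => l /andP[Pl h]; apply: kerS => //.
  by move: h; rewrite /inH1 /inH0 => /andP[-> /negbTE ->].
have hA01 : (A0 :&: A1 = 0)%VS := fixker0 _ _ _ A0fix A1ker.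
have SC1 : forall l, is_part l -> inH1 m n l -> (pi @: tildeI hat I l)%VS = S l.
  move=> l Pl h; rewrite /tildeI (negbTE (H1ne l h)) -limg_comp.
  apply: eq_in_limg => x xl; rewrite comp_lfunE add_lfunE id_lfunE linearD /=.
  have : pi (hat x) \in (pi @: I (c l))%VS by rewrite memv_img // hatI.
  by rewrite pi_zero ?cP ?H1c // memv0 => /eqP ->; rewrite addr0.
have hC1 : C1 = A1 by apply: eq_bigr => l /andP[Pl h]; apply: SC1.
have GA0 : forall l, [&& is_part l, inH0 m n l & ptn_gt l (c l)] ->
    (pi @: tildeI hat I l <= S l + S (c l))%VS.
  move=> l /and3P[Pl h G]; rewrite -limgD; exact: limgS (tIsub l Pl (Gne l G)).
have hC0A0 : (C0 <= A0)%VS.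
  rewrite subv_add; apply/andP; split; apply/subv_sumP.
    move=> l hl; apply: subv_trans (GA0 l hl) _; case/and3P: hl => Pl h _.
    rewrite subv_add (sumv_sup l) ?Pl ?h //= (sumv_sup (c l)) //.
    by rewrite cP // inH0c.
  move=> l /and3P[Pl h E]; have [_ [tE _] _ _ _] := I_self l Pl (eqP E).
  rewrite -limgD -tE; apply: (sumv_sup l); first by rewrite Pl h.
  exact: limgS (tIsubE l E).
have hC01 : (C0 :&: C1 = 0)%VS.
  by apply/eqP; rewrite -subv0 -hA01 capvS // hC1.

have hCsub : (C0 + C1 <= C)%VS.
  rewrite !subv_add; apply/andP; split; [apply/andP; split|]; apply/subv_sumP.
  - by move=> l _; apply: limgS.
  - move=> l /and3P[Pl h E]; have [_ [tE _] _ _ _] := I_self l Pl (eqP E).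
    by rewrite -limgD -tE limgS.
  - by move=> l _; apply: limgS.
have xlI : forall l x, is_part l -> e l * x \in I l.
  by move=> l x Pl; have /andP[_ ->] := I_ideal l Pl x _ (eP l Pl).1.
have hatxl : forall l x, is_part l -> hat x = x -> hat (e l * x) = e (c l) * x.
  by move=> l x Pl hx; rewrite hatM hate // hx.
have hCsup : (C <= C0 + C1)%VS.
  apply/subvP => _ /memv_imgP[x /fixedSpaceP xfix ->].
  rewrite (xdec x) linear_sum /= (bigID (fun l => inH0 m n l)) /=.
  apply: memv_add; last first.
    have -> : \sum_(l | is_part l && ~~ inH0 m n l) pi (e l * x) =
              \sum_(l | is_part l && inH1 m n l) pi (e l * x).
      rewrite [LHS]big_mkcond [RHS]big_mkcond; apply: eq_bigr => l _.
      case Pl: (is_part l) => //=; rewrite /inH1 /inH0.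
      case h: (inH m n l) => //=.
      have : pi (e l * x) \in S l by apply: memv_img; apply: xlI.
      by rewrite /S pi_zero ?h // memv0 => /eqP ->.
    apply: memv_sumr => l /andP[Pl h]; rewrite SC1 //; exact: memv_img (xlI l x Pl).
  rewrite (split3 _ (fun l => pi (e l * x))) reidx -big_split /= /C0.
  apply: memv_add; apply: memv_sumr.
    move=> l /and3P[Pl h G]; rewrite -linearD -(hatxl l x Pl xfix).
    apply: memv_img; rewrite /tildeI (negbTE (Gne l G)).
    by have := memv_img (\1 + hat)%VF (xlI l x Pl); rewrite add_lfunE id_lfunE.
  move=> l /and3P[Pl h E]; have [_ [tE _] _ _ _] := I_self l Pl (eqP E).
  rewrite -limgD -tE; apply: memv_img; rewrite -/c in E.
  rewrite /tildeI -/c E memv_cap xlI //; apply/fixedSpaceP.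
  by rewrite hatxl // -(eqP E).
have hC : C = (C0 + C1)%VS by apply/eqP; rewrite eqEsubv hCsub hCsup.

have dimS : forall l, is_part l -> inH m n l -> \dim (S l) = \dim (I l).
  by move=> l Pl h; rewrite limg_dim_eq // capvC pi_inj.
have prPair : forall (Q : pred (ptn r)) a b u, is_part a -> is_part b -> u \in (S a + S b)%VS ->
   (Q a -> Q b -> prQ Q u = u) /\ (~~ Q a -> ~~ Q b -> prQ Q u = 0).
  move=> Q a b u Pa Pb /memv_addP[ua ya [ub yb ->]].
  rewrite linearD /= (prS Q a Pa ua ya) (prS Q b Pb ub yb).
  by split=> h1 h2; rewrite ?h1 ?h2 ?(negbTE h1) ?(negbTE h2) ?addr0.
have kerpair : forall a b, is_part a -> is_part b -> a != b -> inH m n a -> inH m n b ->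
   ((I a + I b) :&: lker pi = 0)%VS.
  move=> a b Pa Pb ab ha hb; apply/eqP; rewrite -subv0; apply/subvP => u.
  case/memv_capP => /memv_addP[ua ya [ub yb ->]] uk; rewrite memv0.
  have pk : forall z, pi (e z * (ua + ub)) = 0.
    by move=> z; rewrite piM; move: uk; rewrite memv_ker => /eqP ->; rewrite mulmx0.
  have ea : e a * (ua + ub) = ua.
    by rewrite mulrDr (eE a a Pa Pa ua ya).1 (eE a b Pa Pb ub yb).1 eqxx (negbTE ab) addr0.
  have eb : e b * (ua + ub) = ub.
    by rewrite mulrDr (eE b a Pb Pa ua ya).1 (eE b b Pb Pb ub yb).1 eqxx eq_sym (negbTE ab) add0r.
  have za : ua = 0.
    by apply/eqP; rewrite -memv0 -(pi_inj a Pa ha) memv_cap ya andbT memv_ker -{1}ea pk.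
  have zb : ub = 0.
    by apply/eqP; rewrite -memv0 -(pi_inj b Pb hb) memv_cap yb andbT memv_ker -{1}eb pk.
  by rewrite za zb addr0.
have onehat_ker : forall l, is_part l -> l != c l -> (I l :&: lker (GRing.add \1%VF hat))%VS = 0%VS.
  move=> l Pl ne; apply/eqP; rewrite -subv0; apply/subvP => u /memv_capP[ul].
  rewrite memv_ker add_lfunE id_lfunE memv0 => /eqP h.
  have hu : hat u = - u by rewrite -(addKr u (hat u)) h addr0.
  have : hat u = 0.
    apply: (capI (c l) l (cP l Pl) Pl _ _ (hatI l Pl u ul)); first by rewrite eq_sym.
    by rewrite hu memvN.
  by move=> h0; rewrite -[u]hatK h0 linear0.
have dimtG : forall l, is_part l -> inH0 m n l -> l != c l ->
    \dim (pi @: tildeI hat I l) = \dim (I l).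
  move=> l Pl /andP[h1 h2] ne; rewrite limg_dim_eq; last first.
    apply/eqP; rewrite -subv0; apply: subv_trans (capvS (tIsub l Pl ne) (subvv _)) _.
    by rewrite (kerpair l (c l) Pl (cP l Pl) ne h1 h2).
  by rewrite /tildeI (negbTE ne) limg_dim_eq //; apply: onehat_ker.
have dimtE : forall l, is_part l -> inH m n l -> l == c l ->
    \dim (pi @: tildeI hat I l) = \dim (tildeI hat I l).
  move=> l Pl h E; rewrite limg_dim_eq //; apply/eqP; rewrite -subv0.
  apply: subv_trans (capvS (tIsubE l E) (subvv _)) _.
  by rewrite capvC pi_inj.
have dimE : forall l, is_part l -> inH m n l -> l == c l ->
    (\dim (I l) = 2 * \dim (pi @: (Ip l + Im l)))%N.
  move=> l Pl h E; have [ev [tE cap0] _ mp mm] := I_self l Pl (eqP E).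
  rewrite -tE dimtE // tE dimv_disjoint_sum // (dim_mat_block mp) (dim_mat_block mm).
  rewrite (dim_mat_block (I_mat l Pl).2).
  have ev2 : (2 %| d l)%N by rewrite dvdn2.
  have := divnK ev2.
  set k := (d l %/ 2)%N => hk; rewrite -hk; nia.

have dA0 : directv A0.
  rewrite /A0; apply/directv_sum_independent => us Hus s0 k /andP[Pk hk].
  have := congr1 (prQ (pred1 k)) s0; rewrite linear_sum linear0 /=.
  rewrite (eq_bigr (fun l => if l == k then us l else 0)); last first.
    by move=> l hl; rewrite (prS (pred1 k) l (proj1 (andP hl)) _ (Hus l hl)).
  by rewrite sum_delta // Pk hk.
have dimA0 : \dim A0 = (\sum_(l | is_part l && inH0 m n l) \dim (I l))%N.
  move/directvP: dA0 => /= ->; apply: eq_bigr => l /andP[Pl h].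
  exact: dimS l Pl (proj1 (andP h)).

pose X := (\sum_(l | [&& is_part l, inH0 m n l & ptn_gt l (ptn_conj l)]) (pi @: tildeI hat I l))%VS.
pose Y := (\sum_(l | [&& is_part l, inH0 m n l & l == ptn_conj l]) (pi @: (Ip l + Im l)))%VS.
have YS : forall l, [&& is_part l, inH0 m n l & l == ptn_conj l] ->
    (pi @: (Ip l + Im l) <= S l)%VS.
  move=> l /and3P[Pl h E]; have [_ [tE _] _ _ _] := I_self l Pl (eqP E).
  by rewrite -tE; apply: limgS (tIsubE l E).
have dX : directv X.
  rewrite /X; apply/directv_sum_independent => us Hus s0 k /and3P[Pk hk Gk].
  have := congr1 (prQ (fun j => (j == k) || (j == c k))) s0; rewrite linear_sum linear0 /=.
  rewrite (eq_bigr (fun l => if l == k then us l else 0)); last first.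
    move=> l hl; have /and3P[Pl hl0 Gl] := hl.
    have uS := subvP (GA0 l hl) _ (Hus l hl).
    have [pp pn] := prPair (fun j => (j == k) || (j == c k)) l (c l) (us l) Pl (cP l Pl) uS.
    have [E|lk] := eqVneq l k.
      by subst l; rewrite pp ?eqxx ?orbT.
    have [a1 a2 a3] := Gpair l k Pl Pk Gl Gk lk.
    by rewrite pn //= ?(negbTE lk) ?(negbTE a1) ?(negbTE a2) ?(negbTE a3).
  by rewrite sum_delta // Pk hk Gk.
have dimX : \dim X = (\sum_(l | [&& is_part l, inH0 m n l & ptn_gt l (ptn_conj l)]) \dim (I l))%N.
  move/directvP: dX => /= ->; apply: eq_bigr => l /and3P[Pl h G].
  exact: dimtG l Pl h (Gne l G).
have dY : directv Y.
  rewrite /Y; apply/directv_sum_independent => us Hus s0 k /and3P[Pk hk Ek].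
  have := congr1 (prQ (pred1 k)) s0; rewrite linear_sum linear0 /=.
  rewrite (eq_bigr (fun l => if l == k then us l else 0)); last first.
    move=> l hl; have /and3P[Pl _ _] := hl.
    by rewrite (prS (pred1 k) l Pl _ (subvP (YS l hl) _ (Hus l hl))).
  by rewrite sum_delta // Pk hk Ek.
have dimY : \dim Y = (\sum_(l | [&& is_part l, inH0 m n l & l == ptn_conj l])
                        \dim (pi @: (Ip l + Im l)))%N.
  by move/directvP: dY => /= ->.
have XY : (X :&: Y = 0)%VS.
  rewrite capvC; apply: (fixker0 (fun j => j == c j)).
    apply/subv_sumP => l hl; have /and3P[Pl _ E] := hl.
    exact: subv_trans (YS l hl) (fixS _ l Pl E).
  apply/subv_sumP => l hl; have /and3P[Pl _ G] := hl.
  apply: subv_trans (GA0 l hl) _; rewrite subv_add !kerS ?cP //= ?cK //.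
    by rewrite eq_sym Gne.
  exact: Gne.
have C0XY : C0 = (X + Y)%VS.
  by rewrite /C0 /Y; congr (_ + _)%VS; apply: eq_bigr => l _; rewrite limgD.
have dimC0 : \dim C0 = (\dim X + \dim Y)%N by rewrite C0XY; exact: dimv_disjoint_sum XY.
have dimA0C0 : \dim A0 = (2 * \dim C0)%N.
  rewrite dimA0 dimC0 dimX dimY (split3 _ (fun l => \dim (I l))) reidx.
  have e1 : \sum_(l | [&& is_part l, inH0 m n l & ptn_gt l (c l)]) \dim (I (c l)) =
            \sum_(l | [&& is_part l, inH0 m n l & ptn_gt l (c l)]) \dim (I l).
    by apply: eq_bigr => l /and3P[Pl _ _]; exact: Ihat_dim.
  have e2 : \sum_(l | [&& is_part l, inH0 m n l & l == c l]) \dim (I l) =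
            \sum_(l | [&& is_part l, inH0 m n l & l == c l]) (2 * \dim (pi @: (Ip l + Im l)))%N.
    by apply: eq_bigr => l /and3P[Pl /andP[h _] E]; exact: dimE.
  have eG : \sum_(l | [&& is_part l, inH0 m n l & ptn_gt l (c l)]) \dim (I l) =
            (\sum_(l | [&& is_part l, inH0 m n l & ptn_gt l (ptn_conj l)]) \dim (I l))%N := erefl.
  have e3 : \sum_(l | [&& is_part l, inH0 m n l & l == c l]) (2 * \dim (pi @: (Ip l + Im l)))%N =
            (2 * \sum_(l | [&& is_part l, inH0 m n l & l == ptn_conj l]) \dim (pi @: (Ip l + Im l)))%N.
    by elim/big_rec2: _ => [|l a b _ ->]; rewrite ?muln0 // mulnDr.
  rewrite e1 e2 eG e3.
  lia.
by split; split => //; rewrite hC1.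
Qed.
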